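(* Let $S=[B_{r-1},[B_r,F_X^+]_q]_q$ and $S^\tau=[B_{\tau(r-1)},[B_{\tau(r)},F_X^-]_q]_q$, and let $\mathcal Z_r=-(1-q^{-2})E_X^+L_{\tau(r)}$, $\mathcal Z_{\tau(r)}=-(1-q^{-2})E_X^-L_r$. Then $\mathcal Z_{\tau(r)}S=q^{-1}S\mathcal Z_{\tau(r)}+(1-q^{-2})[B_{r-1},B_r]_qL_rK_X$ and $\mathcal Z_rS^\tau=q^{-1}S^\tau\mathcal Z_r+(1-q^{-2})[B_{\tau(r-1)},B_{\tau(r)}]_qL_{\tau(r)}K_X$ hold in $B_{\mathbf c}$.
   Context: Let $\mathbb K$ be a field of characteristic zero and $q$ an indeterminate. $n\ge1$, $I=\{1,\dots,n\}$, $\mathfrak g=\mathfrak{sl}_{n+1}(\mathbb C)$, simple roots $\alpha_i$, fundamental weights $\varpi_i$, weight lattice $P$, Cartan matrix $a_{ii}=2$, $a_{ij}=-1$ if $|i-j|=1$, else $0$, form $(\alpha_i,\alpha_j)=a_{ij}$, $(\alpha_i,\varpi_j)=\delta_{ij}$. $U_q(\mathfrak g)$ is the $\mathbb K(q^{1/2})$-algebra generated by $E_i,F_i,K_\mu$ ($\mu\in P$) with $K_0=1$, $K_\mu K_\lambda=K_{\mu+\lambda}$, $K_\mu E_i=q^{(\alpha_i,\mu)}E_iK_\mu$, $K_\mu F_i=q^{-(\alpha_i,\mu)}F_iK_\mu$, $E_iF_j-F_jE_i=\delta_{ij}\frac{K_i-K_i^{-1}}{q-q^{-1}}$ ($K_i=K_{\alpha_i}$),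 and the quantum Serre relations. $[a,b]_c=ab-cba$. Fix $r$ with $2\le r\le\lceil n/2\rceil-1$, $X=\{r+1,\dots,n-r\}$, $\tau(i)=n-i+1$ (on weights $\varpi_i\mapsto\varpi_{\tau(i)}$). $E_X^+=[E_{r+1},[\dots,[E_{n-r-1},E_{n-r}]_{q^{-1}}\dots]_{q^{-1}}]_{q^{-1}}$, $E_X^-=[E_{n-r},[\dots,[E_{r+2},E_{r+1}]_{q^{-1}}\dots]_{q^{-1}}]_{q^{-1}}$, $F_X^+=[F_{r+1},[\dots,[F_{n-r-1},F_{n-r}]_q\dots]_q]_q$, $F_X^-=[F_{n-r},[\dots,[F_{r+2},F_{r+1}]_q\dots]_q]_q$ (equal to $E_{r+1}$, $F_{r+1}$ if $|X|=1$); $K_X=K_{r+1}\cdots K_{n-r}$; $L_i=K_iK_{\tau(i)}^{-1}$. $\mathcal M_X$ is generated by $E_j,F_j,K_j^{\pm1}$ ($j\in X$); $U^0_\Theta$ by the $K_\mu$ with $-w_X\tau(\mu)=\mu$ ($w_X$ longest element of the parabolic Weyl subgroup for $X$). Parameters $c_i\in\mathbb K(q^{1/2})^\times$ ($i\in I\setminus X$) with $c_i=c_{\tau(i)}$ for $i\notin X\cup\{r,\tau(r)\}$. $B_i=F_i-c_iE_{\tau(i)}K_i^{-1}$ for $i\in I\setminus(X\cup\{r,\tau(r)\})$, $B_r=F_r-c_r[E_X^+,E_{\tau(r)}]_{q^{-1}}K_r^{-1}$, $B_{\tau(r)}=F_{\tau(r)}-c_{\tau(r)}[E_X^-,E_r]_{q^{-1}}K_{\tau(r)}^{-1}$;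 $B_{\mathbf c}$ is the subalgebra generated by $\mathcal M_X$, $U^0_\Theta$ and the $B_i$. *)

(* Defs.v *)
(* Quantum group U_q(sl_{n+1}) presented by generators and
   relations; identities in U_q are stated via its universal property:
   they must hold for every algebra A with elements satisfying the defining
   relations. *)
From HB Require Import structures.
From mathcomp Require Import all_boot all_order all_algebra.
Set Implicit Arguments. Unset Strict Implicit. Unset Printing Implicit Defensive.
Import Order.TTheory GRing.Theory Num.Theory.
Local Open Scope ring_scope.

(* Cartan matrix of type A_n (indices are natural numbers 1..n). *)
Definition cartan (i j : nat) : int :=
  if i == j then 2 else if (i == j.+1) || (j == i.+1) then -1 else 0.

(* Weights: mu : 'rV[int]_n, where mu 0 j is the coefficient of varpi_{j+1}. *)
Definition varpi (n i : nat) : 'rV[int]_n := \row_(j < n) ((j.+1 == i) : nat)%:Z.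
Definition alpha (n i : nat) : 'rV[int]_n := \row_(j < n) cartan i j.+1.
(* (alpha_i, mu) = coefficient of varpi_i in mu *)
Definition apair (n : nat) (i : nat) (mu : 'rV[int]_n) : int :=
  \sum_(j < n | j.+1 == i) mu 0 j.

Definition tau (n i : nat) : nat := n.+1 - i.
Definition Xseq (n r : nat) : seq nat := iota r.+1 (n - r.*2).

Section Uq.
Variables (R : fieldType) (A : algType R).

Definition qcomm (c : R) (a b : A) : A := a * b - c *: (b * a).

Fixpoint qnest (c : R) (G : nat -> A) (s : seq nat) : A :=
  match s with
  | [::] => 0
  | x :: s' => match s' with
               | [::] => G x
               | _ => qcomm c (G x) (qnest c G s')
               end
  end.

Definition Uq_relations (n : nat) (q : R) (E F : nat -> A)
  (K : 'rV[int]_n -> A) : Prop :=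
  K 0 = 1 /\
      (forall mu la, K (mu + la) = K mu * K la) /\
      (forall mu i, (0 < i <= n)%N ->
          K mu * E i = q ^ (apair i mu) *: (E i * K mu)) /\
      (forall mu i, (0 < i <= n)%N ->
          K mu * F i = q ^ (- apair i mu) *: (F i * K mu)) /\
      (forall i j, (0 < i <= n)%N -> (0 < j <= n)%N ->
          E i * F j - F j * E i =
          if i == j then (q - q^-1)^-1 *: (K (alpha n i) - K (- alpha n i))
          else 0) /\
      (forall i j, (0 < i <= n)%N -> (0 < j <= n)%N -> i != j ->
          (cartan i j = 0 -> E i * E j = E j * E i /\ F i * F j = F j * F i) /\
          (cartan i j = -1 ->
             E i ^+ 2 * E j - (q + q^-1) *: (E i * E j * E i) + E j * E i ^+ 2 = 0
          /\ F i ^+ 2 * F j - (q + q^-1) *: (F i * F j * F i) + F j * F i ^+ 2 = 0)).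

Variables (n r : nat) (q : R) (c : nat -> R) (E F : nat -> A)
          (K : 'rV[int]_n -> A).

Definition EXp : A := qnest q^-1 E (Xseq n r).
Definition EXm : A := qnest q^-1 E (rev (Xseq n r)).
Definition FXp : A := qnest q F (Xseq n r).
Definition FXm : A := qnest q F (rev (Xseq n r)).
Definition Kinv (i : nat) : A := K (- alpha n i).
Definition Lw (i : nat) : A := K (alpha n i - alpha n (tau n i)).
Definition KX : A := K (\sum_(j <- Xseq n r) alpha n j).

(* B_i for i not in X \cup {r, tau r} *)
Definition Bgen (i : nat) : A := F i - c i *: (E (tau n i) * Kinv i).
Definition Br : A := F r - c r *: (qcomm q^-1 EXp (E (tau n r)) * Kinv r).
Definition Btr : A :=
  F (tau n r) - c (tau n r) *: (qcomm q^-1 EXm (E r) * Kinv (tau n r)).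

End Uq.

(* Main.v *)
Require Import Defs.
From HB Require Import structures.
From mathcomp Require Import all_boot all_order all_algebra.
From mathcomp Require Import ring zify.
Set Implicit Arguments. Unset Strict Implicit. Unset Printing Implicit Defensive.
Import Order.TTheory GRing.Theory Num.Theory.
Local Open Scope ring_scope.

Inductive sc := SQ of int | SD | SS | S0 | S1 | SAdd of sc & sc | SOpp of sc | SMul of sc & sc.
Inductive nt := NAt of nat | N0 | N1 | NAdd of nt & nt | NOpp of nt | NMul of nt & nt
              | NSc of sc & nt.

Definition key := (seq nat * int * nat * nat)%type.
Definition term := (key * int)%type.

Definition tmul (t1 t2 : term) : term :=
  (((t1.1.1.1.1 ++ t2.1.1.1.1), (t1.1.1.1.2 + t2.1.1.1.2)%R, (t1.1.1.2 + t2.1.1.2)%N,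
    (t1.1.2 + t2.1.2)%N), (t1.2 * t2.2)%R).
Definition topp (t : term) : term := (t.1, - t.2).

Fixpoint ins (t : term) (p : seq term) : seq term :=
  match p with
  | [::] => if t.2 == 0 then [::] else [:: t]
  | t' :: p' => if t'.1 == t.1 then
                  (if t'.2 + t.2 == 0 then p' else (t.1, t'.2 + t.2) :: p')
                else t' :: ins t p'
  end.
Definition norm (p : seq term) := foldr ins [::] p.
Fixpoint pmul0 (p1 p2 : seq term) : seq term :=
  match p1 with [::] => [::] | t :: p1' => map (tmul t) p2 ++ pmul0 p1' p2 end.
Definition pmul p1 p2 := norm (pmul0 p1 p2).

Fixpoint nsc (s : sc) : seq term :=
  match s with
  | SQ z => [:: (([::], z, 0%N, 0%N), 1)]
  | SD => [:: (([::], 0, 1%N, 0%N), 1)]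
  | SS => [:: (([::], 0, 0%N, 1%N), 1)]
  | S0 => [::]
  | S1 => [:: (([::], 0, 0%N, 0%N), 1)]
  | SAdd a b => norm (nsc a ++ nsc b)
  | SOpp a => map topp (nsc a)
  | SMul a b => pmul (nsc a) (nsc b)
  end.
Fixpoint nnt (t : nt) : seq term :=
  match t with
  | NAt i => [:: (([:: i], 0, 0%N, 0%N), 1)]
  | N0 => [::]
  | N1 => [:: (([::], 0, 0%N, 0%N), 1)]
  | NAdd a b => norm (nnt a ++ nnt b)
  | NOpp a => map topp (nnt a)
  | NMul a b => pmul (nnt a) (nnt b)
  | NSc s a => pmul (nsc s) (nnt a)
  end.

Fixpoint mono (t : nt) : option (seq nat) :=
  match t with
  | NAt i => Some [:: i]
  | N1 => Some [::]
  | NMul a b => match mono a, mono b with Some u, Some v => Some (u ++ v) | _, _ => None end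
  | _ => None
  end.

Fixpoint fsplit (l w : seq nat) : option (seq nat * seq nat) :=
  if take (size l) w == l then Some ([::], drop (size l) w) else
  match w with [::] => None | x :: w' =>
    match fsplit l w' with Some uv => Some (x :: uv.1, uv.2) | None => None end end.

Definition crule := (seq nat * seq term)%type.
Fixpoint crules (rs : seq (nt * nt)) : seq crule :=
  match rs with
  | [::] => [::]
  | r :: rs' => match mono r.1 with
                | Some w => (w, nnt r.2) :: crules rs'
                | None => crules rs' end
  end.

Fixpoint app_rules (crs : seq crule) (t : term) : option (seq term) :=
  match crs with
  | [::] => None
  | cr :: crs' =>
    match cr.1 with [::] => app_rules crs' t | _ =>
    match fsplit cr.1 t.1.1.1.1 with
    | Some (u, v) => Some [seq tmul (tmul ((u, t.1.1.1.2, t.1.1.2, t.1.2), t.2) s)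
                                 ((v, 0, 0%N, 0%N), 1) | s <- cr.2]
    | None => app_rules crs' t
    end end
  end.

Fixpoint step0 (crs : seq crule) (p : seq term) : bool * seq term :=
  match p with
  | [::] => (false, [::])
  | t :: p' => let: (b, r) := step0 crs p' in
     match app_rules crs t with Some ps => (true, ps ++ r) | None => (b, t :: r) end
  end.

Fixpoint reduce (crs : seq crule) (fuel : nat) (p : seq term) : seq term :=
  match fuel with
  | 0 => p
  | f.+1 => let: (b, p') := step0 crs p in if b then reduce crs f (norm p') else p
  end.

Definition expand (s : int) (k : nat) : seq (int * int) :=
  [seq ((k%:Z - (2 * j)%N%:Z)%R, (s ^+ j * ('C(k, j))%:Z)%R) | j <- iota 0 k.+1].
Definition lift1 (D : nat) (t : term) : seq term :=
  [seq ((t.1.1.1.1, (t.1.1.1.2 + x.1)%R, D, t.1.2), (t.2 * x.2)%R) | x <- expand (-1) (D - t.1.1.2)].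
Definition lift2 (M : nat) (t : term) : seq term :=
  [seq ((t.1.1.1.1, (t.1.1.1.2 + x.1)%R, t.1.1.2, M), (t.2 * x.2)%R) | x <- expand 1 (M - t.1.2)].
Definition maxd (p : seq term) := foldr (fun t m => maxn t.1.1.2 m) 0%N p.
Definition maxm (p : seq term) := foldr (fun t m => maxn t.1.2 m) 0%N p.
Definition finalize (p : seq term) :=
  let p1 := flatten (map (lift1 (maxd p)) p) in
  norm (flatten (map (lift2 (maxm p1)) p1)).

Definition check (rs : seq (nt * nt)) (fuel : nat) (tl tr : nt) : bool :=
  finalize (reduce (crules rs) fuel (nnt (NAdd tl (NOpp tr)))) == [::].

Definition cres (rs : seq (nt * nt)) (fuel : nat) (tl tr : nt) :=
  finalize (reduce (crules rs) fuel (nnt (NAdd tl (NOpp tr)))).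

Section Sem.
Variables (R : fieldType) (A : algType R) (q : R) (env : seq A).
Definition dl := q - q^-1.
Definition sg := q + q^-1.
Definition ck (k : key) (c : int) : R := c%:~R * (q ^ k.1.1.2 * (dl ^- k.1.2 * sg ^- k.2)).
Fixpoint ew (w : seq nat) : A :=
  match w with [::] => 1 | [:: i] => nth 0 env i | i :: w' => nth 0 env i * ew w' end.
Definition et (t : term) : A := ck t.1 t.2 *: ew t.1.1.1.1.
Definition ep (p : seq term) : A := foldr (fun t acc => et t + acc) 0 p.

Fixpoint evs (s : sc) : R :=
  match s with
  | SQ z => q ^ z | SD => dl^-1 | SS => sg^-1 | S0 => 0 | S1 => 1
  | SAdd a b => evs a + evs b | SOpp a => - evs a | SMul a b => evs a * evs b
  end.
Fixpoint evt (t : nt) : A :=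
  match t with
  | NAt i => nth 0 env i | N0 => 0 | N1 => 1
  | NAdd a b => evt a + evt b | NOpp a => - evt a | NMul a b => evt a * evt b
  | NSc s a => evs s *: evt a
  end.

Fixpoint rules_ok (rs : seq (nt * nt)) : Prop :=
  match rs with
  | [::] => True
  | [:: r] => evt r.1 = evt r.2
  | r :: rs' => evt r.1 = evt r.2 /\ rules_ok rs'
  end.

Hypothesis q0 : q != 0.
Hypothesis dl0 : dl != 0.
Hypothesis sg0 : sg != 0.

Lemma ew_cons i w : ew (i :: w) = nth 0 env i * ew w.
Proof. by case: w => //=; rewrite mulr1. Qed.
Lemma ew_cat u v : ew (u ++ v) = ew u * ew v.
Proof. elim: u => [|i u IH]; first by rewrite /= mul1r. by rewrite cat_cons !ew_cons IH mulrA. Qed.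

Lemma ep_cat p1 p2 : ep (p1 ++ p2) = ep p1 + ep p2.
Proof. elim: p1 => [|t p IH] /=; first by rewrite add0r. by rewrite IH addrA. Qed.

Lemma ck1 w : ck (w, 0, 0%N, 0%N) 1 = 1.
Proof. by rewrite /ck /= mul1r expr0z !expr0 !invr1 !mulr1. Qed.

Lemma ck_mul k1 c1 k2 c2 :
  ck ((k1.1.1.1 ++ k2.1.1.1), (k1.1.1.2 + k2.1.1.2)%R, (k1.1.2 + k2.1.2)%N, (k1.2 + k2.2)%N) (c1 * c2)
  = ck k1 c1 * ck k2 c2.
Proof.
rewrite /ck /= intrM expfzDr // !exprD !invfM.
set a := _%:~R; set b := _%:~R; set x := q ^ _; set y := q ^ _.
set z := dl ^- _; set w := dl ^- _; set u := sg ^- _; set v := sg ^- _.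
by ring.
Qed.

Lemma et_mul t1 t2 : et (tmul t1 t2) = et t1 * et t2.
Proof.
case: t1 => k1 c1; case: t2 => k2 c2.
by rewrite /et /tmul /= ck_mul ew_cat -scalerAl -scalerAr scalerA.
Qed.

Lemma et_opp t : et (topp t) = - et t.
Proof. by rewrite /et /ck /= mulrNz mulNr scaleNr. Qed.

Lemma ep_opp p : ep (map topp p) = - ep p.
Proof. elim: p => [|t p IH] /=; first by rewrite oppr0. by rewrite IH et_opp opprD. Qed.

Lemma et_addc k c1 c2 : et (k, c1 + c2) = et (k, c1) + et (k, c2).
Proof. by rewrite /et /ck /= intrD mulrDl scalerDl. Qed.
Lemma et_0 k : et (k, 0) = 0.
Proof. by rewrite /et /ck /= mul0r scale0r. Qed.

Lemma ep_ins t p : ep (ins t p) = et t + ep p.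
Proof.
elim: p => [|t' p IH] /=.
  by case: ifP => [/eqP|] /=; rewrite ?addr0 // => e; case: t e => k c /= ->; rewrite et_0.
case: ifP => [/eqP ek|_] /=; last by rewrite IH addrCA.
case: ifP => [/eqP ec|_] /=.
  rewrite addrA; clear IH; case: t ek ec => k c /=; case: t' => k' c' /= -> ec.
  by rewrite -et_addc [c + c']addrC ec et_0 add0r.
clear IH; case: t ek => k c /=; case: t' => k' c' /= ->.
by rewrite et_addc addrA [et (k, c') + _]addrC.
Qed.

Lemma ep_norm p : ep (norm p) = ep p.
Proof. elim: p => [|t p IH] //=. by rewrite ep_ins IH. Qed.

Lemma ep_map_tmul t p : ep (map (tmul t) p) = et t * ep p.
Proof. elim: p => [|s p IH] /=; first by rewrite mulr0. by rewrite IH et_mul mulrDr. Qed.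

Lemma ep_pmul p1 p2 : ep (pmul p1 p2) = ep p1 * ep p2.
Proof.
rewrite /pmul ep_norm; elim: p1 => [|t p IH] /=; first by rewrite mul0r.
by rewrite ep_cat IH ep_map_tmul mulrDl.
Qed.

Lemma ep_nsc s : ep (nsc s) = evs s *: 1.
Proof.
elim: s => [z|||||a IHa b IHb|a IHa|a IHa b IHb] /=.
- by rewrite addr0 /et /ck /= mul1r !expr0 !invr1 !mulr1.
- by rewrite addr0 /et /ck /= mul1r expr1 expr0z expr0 invr1 mulr1 mul1r.
- by rewrite addr0 /et /ck /= mul1r expr1 expr0z expr0 invr1 mul1r mul1r.
- by rewrite scale0r.
- by rewrite addr0 /et ck1.
- by rewrite ep_norm ep_cat IHa IHb scalerDl.
- by rewrite ep_opp IHa scaleNr.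
- by rewrite ep_pmul IHa IHb -scalerAl mul1r scalerA.
Qed.

Lemma ep_nnt t : ep (nnt t) = evt t.
Proof.
elim: t => [i||| a IHa b IHb|a IHa|a IHa b IHb|s a IHa] /=.
- by rewrite addr0 /et ck1 scale1r.
- by [].
- by rewrite addr0 /et ck1 scale1r.
- by rewrite ep_norm ep_cat IHa IHb.
- by rewrite ep_opp IHa.
- by rewrite ep_pmul IHa IHb.
- by rewrite ep_pmul ep_nsc IHa -scalerAl mul1r.
Qed.

Lemma mono_ok t w : mono t = Some w -> evt t = ew w.
Proof.
elim: t w => //= [i w [<-]|w [<-]|a IHa b IHb w] //.
case Ea: (mono a) => [u|] //; case Eb: (mono b) => [v|] // [<-].
by rewrite ew_cat (IHa _ Ea) (IHb _ Eb).
Qed.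

Fixpoint crules_ok (crs : seq crule) : Prop :=
  match crs with [::] => True | cr :: crs' => ew cr.1 = ep cr.2 /\ crules_ok crs' end.

Lemma rules_ok_cons r rs : rules_ok (r :: rs) -> evt r.1 = evt r.2 /\ rules_ok rs.
Proof. by case: rs. Qed.

Lemma crules_okP rs : rules_ok rs -> crules_ok (crules rs).
Proof.
elim: rs => [|r rs IH] //= /rules_ok_cons [h1 h2].
case E: (mono r.1) => [w|]; last exact: IH.
split; last exact: IH.
by rewrite ep_nnt -h1 (mono_ok E).
Qed.

Lemma fsplitP l w u v : fsplit l w = Some (u, v) -> w = u ++ l ++ v.
Proof.
elim: w u v => [|x w IH] u v /=.
  case: ifP => [/eqP e [<- <-]|_] //=. by rewrite -e.
case: ifP => [/eqP e [<- <-]|_] /=.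
  by rewrite -{1}(cat_take_drop (size l) (x :: w)) e.
case E: (fsplit l w) => [[u' v']|] // [<- <-] /=.
by rewrite (IH _ _ E).
Qed.

Lemma ep_map_tmul2 (a b : term) p :
  ep [seq tmul (tmul a s) b | s <- p] = et a * ep p * et b.
Proof.
elim: p => [|s p IH] /=; first by rewrite mulr0 mul0r.
by rewrite IH !et_mul mulrDr mulrDl.
Qed.

Lemma app_rulesP crs t ps : crules_ok crs -> app_rules crs t = Some ps -> ep ps = et t.
Proof.
elim: crs => [|[l p] crs IH] //= [hl hcrs].
case: l hl => [|x l] hl; first exact: IH hcrs.
case E: (fsplit _ _) => [[u v]|]; last exact: IH hcrs.
move=> [<-]; rewrite ep_map_tmul2 -hl; clear IH.
case: t E => [[[[w e] d] m] c] /fsplitP He.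
have {He}-> : w = u ++ (x :: l) ++ v := He.
rewrite /et !ew_cat ck1.
by rewrite scale1r -!scalerAl mulrA.
Qed.

Lemma step0P crs p : crules_ok crs -> ep (step0 crs p).2 = ep p.
Proof.
move=> hc; elim: p => [|t p IH] //=.
case E: (step0 crs p) => [b r]; rewrite E /= in IH.
case F: (app_rules crs t) => [ps|] /=; last by rewrite IH.
by rewrite ep_cat IH (app_rulesP hc F).
Qed.

Lemma reduceP crs f p : crules_ok crs -> ep (reduce crs f p) = ep p.
Proof.
move=> hc; elim: f p => [|f IH] p //=.
have := step0P p hc; case: (step0 crs p) => b p' /= h.
by case: b => //; rewrite IH ep_norm.
Qed.

Lemma qpow_aux k j : (j <= k)%N ->
  q ^+ (k - j) * q^-1 ^+ j = q ^ (k%:Z - (2 * j)%N%:Z)%R.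
Proof.
move=> hj; rewrite exprVn exprnN.
rewrite (_ : q ^+ (k - j) = q ^ ((k - j)%N : int)) // -expfzDr //.
congr (q ^ _); rewrite -subzn //. lia.
Qed.

Lemma gen_exp (s : int) k : (q + s%:~R * q^-1) ^+ k =
  \sum_(j <- iota 0 k.+1) ((s ^+ j)%:~R * ('C(k, j))%:R) * q ^ (k%:Z - (2 * j)%N%:Z)%R.
Proof.
rewrite exprDn -(big_mkord xpredT (fun j => q ^+ (k - j) * (s%:~R * q^-1) ^+ j *+ 'C(k, j))).
rewrite /index_iota subn0.
apply: eq_big_seq => j; rewrite mem_iota add0n => /andP[_ hj].
rewrite exprMn mulrCA qpow_aux // -mulr_natr rmorphXn /=.
set a := _ ^+ j; set b := q ^ _; set c := _%:R. by ring.
Qed.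

Lemma dl_exp k : dl ^+ k =
  \sum_(j <- iota 0 k.+1) (((-1) ^+ j)%:~R * ('C(k, j))%:R) * q ^ (k%:Z - (2 * j)%N%:Z)%R.
Proof. by rewrite -gen_exp /dl mulN1r. Qed.
Lemma sg_exp k : sg ^+ k =
  \sum_(j <- iota 0 k.+1) ((1 ^+ j)%:~R * ('C(k, j))%:R) * q ^ (k%:Z - (2 * j)%N%:Z)%R.
Proof. by rewrite -gen_exp /sg mul1r. Qed.

Lemma ep_map_scal (T : Type) w D M (f : T -> int) (g : T -> int) (s : seq T) :
  ep [seq ((w, f x, D, M), g x) | x <- s] = (\sum_(x <- s) ck (w, f x, D, M) (g x)) *: ew w.
Proof.
elim: s => [|x s IH] /=; first by rewrite big_nil scale0r.
by rewrite big_cons IH scalerDl.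
Qed.

Lemma ep_lift1 D t : (t.1.1.2 <= D)%N -> ep (lift1 D t) = et t.
Proof.
case: t => [[[[w e] d] m] c] hd; rewrite /= in hd.
rewrite /lift1; set s := expand _ _; rewrite ep_map_scal /et; congr (_ *: _).
rewrite /s /expand big_map.
rewrite (_ : (w,e,d,m,c).1.1.2 = d) // (_ : (w,e,d,m,c).1.1.1.2 = e) // (_ : (w,e,d,m,c).2 = c) //.
rewrite (_ : (w,e,d,m,c).1.1.1.1 = w) // (_ : (w,e,d,m,c).1.2 = m) //.
have -> : ck (w, e, d, m, c).1 (w, e, d, m, c).2 = ck (w, e, d, m) c by [].
have -> : ck (w, e, d, m) c = c%:~R * (q ^ e * ((dl ^+ (D - d) * dl ^- D) * sg ^- m)).
  rewrite /ck /=; congr (_ * (_ * (_ * _))).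
  have -> : dl ^- D = dl ^- (D - d) * dl ^- d by rewrite -invfM -exprD subnK.
  by rewrite mulrA divff ?mul1r // expf_neq0.
rewrite dl_exp /ck /= mulr_suml mulr_suml mulr_sumr mulr_sumr.
apply: eq_bigr => j _ /=.
rewrite expfzDr // !intrM.
set a := c%:~R; set b := _%:~R; set x := q ^ e; set y := q ^ _; set z := _ ^- D.
set u := sg ^- m; set v := _%:~R; set v' := _%:R.
rewrite (_ : v = v') //. by ring.
Qed.

Lemma ep_lift2 M t : (t.1.2 <= M)%N -> ep (lift2 M t) = et t.
Proof.
case: t => [[[[w e] d] m] c] hd; rewrite /= in hd.
rewrite /lift2; set s := expand _ _; rewrite ep_map_scal /et; congr (_ *: _).
rewrite /s /expand big_map.
rewrite (_ : (w,e,d,m,c).1.1.2 = d) // (_ : (w,e,d,m,c).1.1.1.2 = e) // (_ : (w,e,d,m,c).2 = c) //.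
rewrite (_ : (w,e,d,m,c).1.1.1.1 = w) // (_ : (w,e,d,m,c).1.2 = m) //.
have -> : ck (w, e, d, m, c).1 (w, e, d, m, c).2 = ck (w, e, d, m) c by [].
have -> : ck (w, e, d, m) c = c%:~R * (q ^ e * (dl ^- d * (sg ^+ (M - m) * sg ^- M))).
  rewrite /ck /=; congr (_ * (_ * (_ * _))).
  have -> : sg ^- M = sg ^- (M - m) * sg ^- m by rewrite -invfM -exprD subnK.
  by rewrite mulrA divff ?mul1r // expf_neq0.
rewrite sg_exp /ck /= mulr_suml mulr_sumr mulr_sumr mulr_sumr.
apply: eq_bigr => j _ /=.
rewrite expfzDr // !intrM.
set a := c%:~R; set b := _%:~R; set x := q ^ e; set y := q ^ _; set z := _ ^- M.
set u := dl ^- d; set v := _%:~R; set v' := _%:R.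
rewrite (_ : v = v') //. by ring.
Qed.

Lemma all_maxd p : all (fun t : term => (t.1.1.2 <= maxd p)%N) p.
Proof.
elim: p => //= t p IH; rewrite leq_maxl /=.
by apply: sub_all IH => t' h; exact: leq_trans h (leq_maxr _ _).
Qed.
Lemma all_maxm p : all (fun t : term => (t.1.2 <= maxm p)%N) p.
Proof.
elim: p => //= t p IH; rewrite leq_maxl /=.
by apply: sub_all IH => t' h; exact: leq_trans h (leq_maxr _ _).
Qed.

Lemma ep_finalize p : ep (finalize p) = ep p.
Proof.
rewrite /finalize; cbv zeta; rewrite ep_norm.
set p1 := flatten (map (lift1 _) p).
have -> : ep (flatten [seq lift2 (maxm p1) i | i <- p1]) = ep p1.
  have := all_maxm p1; move: (maxm p1) => M.
  elim: p1 => [|t p' IH] // /andP[h1 h2].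
  have -> : flatten (map (lift2 M) (t :: p')) = lift2 M t ++ flatten (map (lift2 M) p') by [].
  by rewrite ep_cat ep_lift2 // IH.
rewrite /p1; have := all_maxd p; move: (maxd p) => D.
elim: p {p1} => [|t p IH] // /andP[h1 h2].
have -> : flatten (map (lift1 D) (t :: p)) = lift1 D t ++ flatten (map (lift1 D) p) by [].
by rewrite ep_cat ep_lift1 // IH.
Qed.
End Sem.

Theorem ncr_correct (R : fieldType) (A : algType R) (q : R) (env : seq A)
  (rs : seq (nt * nt)) (fuel : nat) (tl tr : nt) :
  q != 0 -> dl q != 0 -> sg q != 0 -> rules_ok q env rs -> check rs fuel tl tr = true ->
  evt q env tl = evt q env tr.
Proof.
move=> q0 dl0 sg0 hr /eqP hc; apply/eqP; rewrite -subr_eq0.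
have <- : evt q env (NAdd tl (NOpp tr)) = evt q env tl - evt q env tr by [].
have hcr := @crules_okP R A q env q0 rs hr.
rewrite -(ep_nnt env q0) -(reduceP q0 fuel _ hcr) -(ep_finalize env q0 dl0 sg0).
by move: hc; rewrite /cres => ->.
Qed.

Ltac ncr_idx x l :=
  match l with
  | x :: _ => constr:(0%N)
  | _ :: ?r => let n := ncr_idx x r in constr:(S n)
  | _ => fail 100 "ncr: atom not in env:" x
  end.

Ltac ncr_rsc q s :=
  lazymatch s with
  | GRing.inv (GRing.add q (GRing.opp (GRing.inv q))) => constr:(SD)
  | GRing.inv (GRing.add q (GRing.inv q)) => constr:(SS)
  | GRing.inv q => constr:(SQ (Negz 0))
  | GRing.inv (GRing.exp q ?n) => constr:(SQ (Negz (predn n)))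
  | GRing.exp q ?n => constr:(SQ (Posz n))
  | q => constr:(SQ (Posz 1))
  | GRing.add ?a ?b => let x := ncr_rsc q a in let y := ncr_rsc q b in constr:(SAdd x y)
  | GRing.opp ?a => let x := ncr_rsc q a in constr:(SOpp x)
  | GRing.mul ?a ?b => let x := ncr_rsc q a in let y := ncr_rsc q b in constr:(SMul x y)
  | GRing.one _ => constr:(S1)
  | GRing.zero _ => constr:(S0)
  | _ => fail 100 "ncr: unknown scalar:" s
  end.

Ltac ncr_rnt q env t :=
  lazymatch t with
  | GRing.add ?a ?b => let x := ncr_rnt q env a in let y := ncr_rnt q env b in constr:(NAdd x y)
  | GRing.opp ?a => let x := ncr_rnt q env a in constr:(NOpp x)
  | GRing.mul ?a ?b => let x := ncr_rnt q env a in let y := ncr_rnt q env b in constr:(NMul x y)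
  | GRing.scale ?s ?a => let x := ncr_rsc q s in let y := ncr_rnt q env a in constr:(NSc x y)
  | GRing.exp ?a 2 => let x := ncr_rnt q env a in constr:(NMul x x)
  | GRing.zero _ => constr:(N0)
  | GRing.one _ => constr:(N1)
  | _ => let i := ncr_idx t env in constr:(NAt i)
  end.

Ltac ncr_rules q env P :=
  lazymatch P with
  | (?l = ?r) /\ ?P' => let a := ncr_rnt q env l in let b := ncr_rnt q env r in
                        let rest := ncr_rules q env P' in constr:((a, b) :: rest)
  | ?l = ?r => let a := ncr_rnt q env l in let b := ncr_rnt q env r in constr:([:: (a, b)])
  end.

Ltac ncr q env H hq hdl hsg :=
  let P := type of H in let rs := ncr_rules q env P in
  lazymatch goal with |- ?L = ?R =>
    let tl := ncr_rnt q env L in let tr := ncr_rnt q env R in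
    refine (@ncr_correct _ _ q env rs 1000%N tl tr hq hdl hsg H _);
    tryif (vm_compute; reflexivity) then idtac
    else (let x := eval vm_compute in (cres rs 1000%N tl tr) in idtac x; fail 100 "ncr failed")
  end.



Section Gen.
Variables (R : fieldType) (A : algType R).

Lemma qcomm_scal (c s t : R) (x a b : A) :
  x * a = s *: (a * x) -> x * b = t *: (b * x) ->
  x * qcomm c a b = (s * t) *: (qcomm c a b * x).
Proof.
move=> ha hb.
have h1 : x * (a * b) = (s * t) *: (a * b * x).
  by rewrite mulrA ha -scalerAl -[a * x * b]mulrA hb -scalerAr scalerA mulrA.
have h2 : x * (b * a) = (s * t) *: (b * a * x).
  by rewrite mulrA hb -scalerAl -[b * x * a]mulrA ha -scalerAr scalerA mulrA mulrC.
rewrite /qcomm mulrBr mulrBl -scalerAr h1 h2 -scalerAl scalerBr !scalerA.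
by rewrite [c * _]mulrC.
Qed.

Lemma qnest_scal (c : R) (G : nat -> A) (x : A) (f : nat -> R) (s : seq nat) :
  (forall z, z \in s -> x * G z = f z *: (G z * x)) ->
  x * qnest c G s = (\prod_(z <- s) f z) *: (qnest c G s * x).
Proof.
elim: s => [|z s IH] h /=; first by rewrite mulr0 mul0r scaler0.
rewrite big_cons.
have hz : x * G z = f z *: (G z * x) by apply: h; rewrite inE eqxx.
have hs : forall y, y \in s -> x * G y = f y *: (G y * x).
  by move=> y hy; apply: h; rewrite inE hy orbT.
clear h; case: s IH hs => [|y s] IH hs; first by rewrite big_nil mulr1.
exact: qcomm_scal hz (IH hs).
Qed.

Lemma qnest_comm (c : R) (G : nat -> A) (x : A) (s : seq nat) :
  (forall z, z \in s -> x * G z = G z * x) ->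
  x * qnest c G s = qnest c G s * x.
Proof.
move=> h; rewrite (@qnest_scal c G x (fun _ => 1)) ?big1 ?scale1r // => z hz.
by rewrite scale1r h.
Qed.

Lemma qnest_consn c (G : nat -> A) z t : t != [::] ->
  qnest c G (z :: t) = qcomm c (G z) (qnest c G t).
Proof. by case: t. Qed.

Lemma qnest_snoc c (G : nat -> A) s x y :
  (forall u v w : A, u * w = w * u -> qcomm c (qcomm c u v) w = qcomm c u (qcomm c v w)) ->
  (forall z, z \in s -> G z * G y = G y * G z) ->
  qnest c G (s ++ [:: x; y]) = qcomm c (qnest c G (s ++ [:: x])) (G y).
Proof.
move=> ha; elim: s => [|z s IH] // h.
rewrite !cat_cons !qnest_consn ?IH; last by case: s {IH h}.
- rewrite ha //; apply: h; by rewrite inE eqxx.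
- by move=> w hw; apply: h; rewrite inE hw orbT.
- by case: s {IH h}.
Qed.
End Gen.

Section GenQ.
Variables (R : fieldType) (A : algType R) (q : R).
Hypotheses (hq : q != 0) (hdl : q - q^-1 != 0) (hsg : q + q^-1 != 0).

Lemma qcomm_assoc_m (x y z : A) : x * z = z * x ->
  qcomm q^-1 (qcomm q^-1 x y) z = qcomm q^-1 x (qcomm q^-1 y z).
Proof. move=> h; rewrite /qcomm; ncr q [:: x; y; z] h hq hdl hsg. Qed.
Lemma qcomm_assoc_p (x y z : A) : x * z = z * x ->
  qcomm q (qcomm q x y) z = qcomm q x (qcomm q y z).
Proof. move=> h; rewrite /qcomm; ncr q [:: x; y; z] h hq hdl hsg. Qed.
End GenQ.


Lemma cartan_sym i j : cartan i j = cartan j i.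
Proof. rewrite /cartan eq_sym; case: (j == i) => //; by rewrite orbC. Qed.
Lemma cartan_far i j : (i.+1 < j)%N || (j.+1 < i)%N -> cartan i j = 0.
Proof.
move=> h; rewrite /cartan.
have -> : (i == j) = false by apply/eqP; lia.
have -> : (i == j.+1) = false by apply/eqP; lia.
have -> : (j == i.+1) = false by apply/eqP; lia.
by [].
Qed.
Lemma cartan_adj i : cartan i i.+1 = -1.
Proof.
rewrite /cartan; have -> : (i == i.+1) = false by apply/eqP; lia.
by rewrite eqxx orbT.
Qed.
Lemma cartan_adj' i : cartan i.+1 i = -1.
Proof. by rewrite cartan_sym cartan_adj. Qed.
Lemma cartan_self i : cartan i i = 2.
Proof. by rewrite /cartan eqxx. Qed.
Lemma cartan2 i j : cartan i j = 2 -> i = j.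
Proof. by rewrite /cartan; case: eqP => // _; case: ifP. Qed.

Lemma cartan_eq x y x' y' :
  (x == y) = (x' == y') -> (x == y.+1) = (x' == y'.+1) -> (y == x.+1) = (y' == x'.+1) ->
  cartan x y = cartan x' y'.
Proof. by rewrite /cartan => -> -> ->. Qed.

Section Apair.
Variable n : nat.
Lemma apairD i (mu la : 'rV[int]_n) : apair i (mu + la) = apair i mu + apair i la.
Proof. by rewrite /apair -big_split; apply: eq_bigr => j _; rewrite mxE. Qed.
Lemma apairN i (mu : 'rV[int]_n) : apair i (- mu) = - apair i mu.
Proof. by rewrite /apair -sumrN; apply: eq_bigr => j _; rewrite mxE. Qed.
Lemma apair0 i : apair i (0 : 'rV[int]_n) = 0.
Proof. by rewrite /apair big1 // => j _; rewrite mxE. Qed.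
Lemma apair_alpha i j : (0 < i <= n)%N -> apair i (alpha n j) = cartan j i.
Proof.
case/andP=> i0 iN; have hi : (i.-1 < n)%N by lia.
rewrite /apair (big_pred1 (Ordinal hi)) => [|k]; last first.
  by apply/eqP/eqP => [h|->]; [apply: val_inj => /=; lia | rewrite /=; lia].
by rewrite mxE /=; congr cartan; lia.
Qed.
Lemma apair_sum i s : (0 < i <= n)%N ->
  apair i (\sum_(j <- s) alpha n j) = \sum_(j <- s) cartan j i.
Proof.
move=> hi; elim: s => [|j s IH]; first by rewrite !big_nil apair0.
by rewrite !big_cons apairD IH apair_alpha.
Qed.
End Apair.

Section UqS.
Variables (R : fieldType) (A : algType R) (n : nat) (q : R)
          (E F : nat -> A) (K : 'rV[int]_n -> A).
Hypothesis hU : Uq_relations q E F K.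
Hypotheses (hq : q != 0) (hdl : q - q^-1 != 0) (hsg : q + q^-1 != 0).

Lemma UK0 : K 0 = 1. Proof. by case: hU. Qed.
Lemma UKD mu la : K (mu + la) = K mu * K la. Proof. by case: hU => _ [h _]; apply: h. Qed.
Lemma UKE mu i : (0 < i <= n)%N -> K mu * E i = q ^ apair i mu *: (E i * K mu).
Proof. by case: hU => _ [_ [h _]]; apply: h. Qed.
Lemma UKF mu i : (0 < i <= n)%N -> K mu * F i = q ^ (- apair i mu) *: (F i * K mu).
Proof. by case: hU => _ [_ [_ [h _]]]; apply: h. Qed.
Lemma UEF i j : (0 < i <= n)%N -> (0 < j <= n)%N -> i != j -> E i * F j = F j * E i.
Proof.
case: hU => _ [_ [_ [_ [h _]]]] hi hj hij.
by apply/eqP; rewrite -subr_eq0 h // (negbTE hij).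
Qed.
Lemma UEFi i : (0 < i <= n)%N ->
  E i * F i = F i * E i + (q - q^-1)^-1 *: (K (alpha n i) - K (- alpha n i)).
Proof.
case: hU => _ [_ [_ [_ [h _]]]] hi.
by have := h i i hi hi; rewrite eqxx => <-; rewrite addrC subrK.
Qed.
Lemma UEcomm i j : (0 < i <= n)%N -> (0 < j <= n)%N -> i != j -> cartan i j = 0 ->
  E i * E j = E j * E i.
Proof. by case: hU => _ [_ [_ [_ [_ h]]]] hi hj hij hc; case: (h i j hi hj hij) => /(_ hc) []. Qed.
Lemma UFcomm i j : (0 < i <= n)%N -> (0 < j <= n)%N -> i != j -> cartan i j = 0 ->
  F i * F j = F j * F i.
Proof. by case: hU => _ [_ [_ [_ [_ h]]]] hi hj hij hc; case: (h i j hi hj hij) => /(_ hc) []. Qed.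

Definition serreL (x y : A) := x * x * y = (q + q^-1) *: (x * y * x) - y * (x * x).
Definition serreM (x y : A) := x * y * x = (q + q^-1)^-1 *: (x * x * y + y * (x * x)).

Lemma UserreL i j : (0 < i <= n)%N -> (0 < j <= n)%N -> i != j -> cartan i j = -1 ->
  serreL (E i) (E j).
Proof.
case: hU => _ [_ [_ [_ [_ h]]]] hi hj hij hc; case: (h i j hi hj hij) => _ /(_ hc) [] + _.
rewrite /serreL !expr2 => e; apply/eqP; rewrite -subr_eq0 -e.
by rewrite opprB addrA addrAC.
Qed.

Lemma serreLM x y : serreL x y -> serreM x y.
Proof.
rewrite /serreL /serreM => e; by rewrite e subrK scalerA mulVf // scale1r.
Qed.

Lemma Kqnest_E c mu s : all (fun i => (0 < i <= n)%N) s ->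
  K mu * qnest c E s = q ^ (\sum_(i <- s) apair i mu) *: (qnest c E s * K mu).
Proof.
move=> hs; rewrite (@qnest_scal _ _ c E (K mu) (fun i => q ^ apair i mu)).
  congr (_ *: _); elim: s hs => [|i s IH] /=; first by rewrite !big_nil.
  by case/andP=> hi hs; rewrite !big_cons IH // expfzDr.
by move=> z hz; apply: UKE; move/allP: hs; apply.
Qed.
Lemma Kqnest_F c mu s : all (fun i => (0 < i <= n)%N) s ->
  K mu * qnest c F s = q ^ (- \sum_(i <- s) apair i mu) *: (qnest c F s * K mu).
Proof.
move=> hs; rewrite (@qnest_scal _ _ c F (K mu) (fun i => q ^ (- apair i mu))).
  congr (_ *: _); elim: s hs => [|i s IH] /=; first by rewrite !big_nil oppr0.
  by case/andP=> hi hs; rewrite !big_cons IH // opprD expfzDr.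
by move=> z hz; apply: UKF; move/allP: hs; apply.
Qed.

Definition chain (h : nat -> nat) (k : nat) :=
  (forall i j, (i <= k)%N -> (j <= k)%N -> cartan (h i) (h j) = cartan i j) /\
  (forall i, (i <= k)%N -> (0 < h i <= n)%N).

Lemma chain_shift h k : chain h k.+1 -> chain (h \o S) k.
Proof. by case=> h1 h2; split=> [i j hi hj|i hi] /=; [rewrite h1 //; lia | apply: h2]. Qed.
Lemma chain_le h k k' : chain h k -> (k' <= k)%N -> chain h k'.
Proof. by case=> h1 h2 hk; split=> [i j hi hj|i hi]; [apply: h1 | apply: h2]; lia. Qed.
Lemma chain_rng h k i : chain h k -> (i <= k)%N -> (0 < h i <= n)%N.
Proof. by case=> _ h2; apply: h2. Qed.
Lemma chain_neq h k i j : chain h k -> (i <= k)%N -> (j <= k)%N -> i != j -> h i != h j.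
Proof.
case=> h1 _ hi hj hij; apply/eqP => e; have := h1 i j hi hj; rewrite e cartan_self.
by move/esym/cartan2 => e'; rewrite e' eqxx in hij.
Qed.
Lemma chain_Ecomm h k i j : chain h k -> (i <= k)%N -> (j <= k)%N ->
  (i.+1 < j)%N || (j.+1 < i)%N -> E (h i) * E (h j) = E (h j) * E (h i).
Proof.
move=> hc hi hj hij; apply: UEcomm; try exact: chain_rng hc _.
- by apply: (chain_neq hc) => //; apply/eqP; lia.
- by case: hc => h1 _; rewrite h1 // cartan_far.
Qed.
Lemma chain_Fcomm h k i j : chain h k -> (i <= k)%N -> (j <= k)%N ->
  (i.+1 < j)%N || (j.+1 < i)%N -> F (h i) * F (h j) = F (h j) * F (h i).
Proof.
move=> hc hi hj hij; apply: UFcomm; try exact: chain_rng hc _.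
- by apply: (chain_neq hc) => //; apply/eqP; lia.
- by case: hc => h1 _; rewrite h1 // cartan_far.
Qed.
Lemma chain_EF h k i j : chain h k -> (i <= k)%N -> (j <= k)%N -> i != j ->
  E (h i) * F (h j) = F (h j) * E (h i).
Proof.
move=> hc hi hj hij; apply: UEF; try exact: chain_rng hc _.
exact: (chain_neq hc).
Qed.
Lemma chain_serre h k i j : chain h k -> (i <= k)%N -> (j <= k)%N ->
  (j == i.+1) || (i == j.+1) -> serreL (E (h i)) (E (h j)).
Proof.
move=> hc hi hj hij; apply: UserreL; try exact: chain_rng hc _.
- by apply: (chain_neq hc) => //; apply/eqP; lia.
- case: hc => h1 _; rewrite h1 //.
  by case/orP: hij => /eqP ->; rewrite ?cartan_adj ?cartan_adj'.
Qed.

Definition Pe h k := qnest q^-1 E (map h (iota 0 k.+1)).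
Definition Qe h k := qnest q^-1 E (rev (map h (iota 0 k.+1))).
Definition Qf h k := qnest q F (rev (map h (iota 0 k.+1))).
Definition beta h k := \sum_(j <- map h (iota 0 k.+1)) alpha n j.

Lemma map_iotaS (h : nat -> nat) k : map h (iota 0 k.+1) = h 0%N :: map (h \o S) (iota 0 k).
Proof. by rewrite /= -[iota 1 k]/(iota (1 + 0) k) iotaDl -map_comp. Qed.
Lemma map_iota_rcons (h : nat -> nat) k : map h (iota 0 k.+1) = rcons (map h (iota 0 k)) (h k).
Proof. by rewrite -addn1 iotaD map_cat /= cats1. Qed.

Lemma Pe_S h k : Pe h k.+1 = qcomm q^-1 (E (h 0%N)) (Pe (h \o S) k).
Proof. by rewrite /Pe map_iotaS qnest_consn //= map_iotaS. Qed.
Lemma Qe_S h k : Qe h k.+1 = qcomm q^-1 (E (h k.+1)) (Qe h k).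
Proof. by rewrite /Qe map_iota_rcons rev_rcons qnest_consn // map_iota_rcons rev_rcons. Qed.
Lemma beta_S h k : beta h k.+1 = alpha n (h 0%N) + beta (h \o S) k.
Proof. by rewrite /beta map_iotaS big_cons. Qed.

Lemma Qf_S h k : chain h k.+1 -> Qf h k.+1 = qcomm q (Qf (h \o S) k) (F (h 0%N)).
Proof.
move=> hc; rewrite /Qf map_iotaS rev_cons map_iotaS rev_cons -!cats1 -catA /=.
rewrite qnest_snoc //; first exact: qcomm_assoc_p.
move=> z; rewrite mem_rev => /mapP [i]; rewrite mem_iota => /andP [_ hi] -> /=.
apply: (chain_Fcomm hc) => //=; lia.
Qed.

Lemma Pe0 h : Pe h 0 = E (h 0%N). Proof. by []. Qed.
Lemma Qe0 h : Qe h 0 = E (h 0%N). Proof. by []. Qed.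
Lemma Qf0 h : Qf h 0 = F (h 0%N). Proof. by []. Qed.
Lemma beta0 h : beta h 0 = alpha n (h 0%N). Proof. by rewrite /beta big_seq1. Qed.

Lemma sum_adj0 k : \sum_(i <- iota 0 k.+1) cartan i.+1 0 = -1.
Proof.
rewrite /= big_cons cartan_adj' big1_seq ?addr0 // => i /andP[_].
by rewrite mem_iota => /andP[h1 _]; rewrite cartan_far //; apply/orP; right; lia.
Qed.

Lemma chain_sumL h k : chain h k.+1 ->
  \sum_(j <- map (h \o S) (iota 0 k.+1)) cartan j (h 0%N) = -1.
Proof.
move=> [h1 _]; rewrite big_map -(sum_adj0 k); apply: eq_big_seq => i.
by rewrite mem_iota => /andP[_ hi] /=; rewrite h1 //; lia.
Qed.
Lemma chain_sumR h k : chain h k.+1 ->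
  \sum_(j <- map (h \o S) (iota 0 k.+1)) cartan (h 0%N) j = -1.
Proof.
move=> hc; rewrite -(chain_sumL hc); apply: eq_bigr => i _; exact: cartan_sym.
Qed.

Lemma Kcomm mu la : K mu * K la = K la * K mu.
Proof. by rewrite -!UKD addrC. Qed.

Lemma all_chain h k : chain h k -> all (fun i => (0 < i <= n)%N) (map h (iota 0 k.+1)).
Proof.
move=> hc; apply/allP => z /mapP [i]; rewrite mem_iota => /andP[_ hi] ->.
apply: (chain_rng hc); lia.
Qed.

Lemma chain_A h k : chain h k ->
  Pe h k * Qf h k = Qf h k * Pe h k + (q - q^-1)^-1 *: (K (beta h k) - K (- beta h k)).
Proof.
elim: k h => [|k IH] h hc.
  by rewrite Pe0 Qf0 beta0 UEFi //; apply: (chain_rng hc).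
have hc' := chain_shift hc.
have h0 : (0 < h 0%N <= n)%N by apply: (chain_rng hc).
rewrite Pe_S Qf_S // beta_S opprD !UKD.
set e := E (h 0%N); set M := Pe (h \o S) k; set Fq := Qf (h \o S) k; set f := F (h 0%N).
set Kb := K (beta (h \o S) k); set Kbi := K (- beta (h \o S) k).
set K1 := K (alpha n (h 0%N)); set K1i := K (- alpha n (h 0%N)).
have r1 : e * Fq = Fq * e.
  apply: qnest_comm => z; rewrite mem_rev => /mapP [i]; rewrite mem_iota => /andP[_ hi] -> /=.
  apply: (chain_EF hc) => //; lia.
have r2 : M * f = f * M.
  apply/esym/qnest_comm => z /mapP [i]; rewrite mem_iota => /andP[_ hi] -> /=.
  apply/esym/(chain_EF hc) => //; lia.
have r3 : e * f = f * e + (q - q^-1)^-1 *: (K1 - K1i) by apply: UEFi.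
have r4 := IH _ hc'; rewrite -/M -/Fq -/Kb -/Kbi in r4.
have hb : apair (h 0%N) (beta (h \o S) k) = -1 by rewrite apair_sum // chain_sumL.
have r5 : Kb * e = q^-1 *: (e * Kb) by rewrite /Kb UKE // hb exprN1.
have r6 : Kbi * e = q *: (e * Kbi) by rewrite /Kbi UKE // apairN hb opprK expr1z.
have r7 : Kb * f = q *: (f * Kb) by rewrite /Kb UKF // hb opprK expr1z.
have r8 : Kbi * f = q^-1 *: (f * Kbi) by rewrite /Kbi UKF // apairN hb opprK exprN1.
have hs : \sum_(i <- map (h \o S) (iota 0 k.+1)) apair i (alpha n (h 0%N)) = -1.
  rewrite -(chain_sumR hc); apply: eq_big_seq => z /mapP [i]; rewrite mem_iota => /andP[_ hi] ->.
  by rewrite apair_alpha //; apply: (chain_rng hc); rewrite /=; lia.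
have hsi : \sum_(i <- map (h \o S) (iota 0 k.+1)) apair i (- alpha n (h 0%N)) = 1.
  by rewrite (eq_bigr _ (fun i _ => apairN i _)) sumrN hs.
have hall := all_chain hc'.
have r9 : K1 * M = q^-1 *: (M * K1) by rewrite /K1 /M /Pe Kqnest_E // hs exprN1.
have r10 : K1i * M = q *: (M * K1i) by rewrite /K1i /M /Pe Kqnest_E // hsi expr1z.
have hall' : all (fun i => (0 < i <= n)%N) (rev (map (h \o S) (iota 0 k.+1))) by rewrite all_rev.
have r11 : K1 * Fq = q *: (Fq * K1) by rewrite /K1 /Fq /Qf Kqnest_F // big_rev hs opprK expr1z.
have r12 : K1i * Fq = q^-1 *: (Fq * K1i) by rewrite /K1i /Fq /Qf Kqnest_F // big_rev hsi exprN1.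
have r13 : Kb * K1 = K1 * Kb by apply: Kcomm.
have r14 : Kbi * K1 = K1 * Kbi by apply: Kcomm.
have r15 : Kb * K1i = K1i * Kb by apply: Kcomm.
have r16 : Kbi * K1i = K1i * Kbi by apply: Kcomm.
rewrite /qcomm.
ncr q [:: e; M; Fq; f; Kb; Kbi; K1; K1i]
  (conj r1 (conj r2 (conj r3 (conj r4 (conj r5 (conj r6 (conj r7 (conj r8 (conj r9 (conj r10
  (conj r11 (conj r12 (conj r13 (conj r14 (conj r15 r16))))))))))))))) hq hdl hsg.
Qed.

Lemma serre_lin (e d Y : A) : serreL e d -> e * Y = Y * e -> serreL e (qcomm q^-1 d Y).
Proof. rewrite /serreL /qcomm => h1 h2; ncr q [:: e; d; Y] (conj h2 h1) hq hdl hsg. Qed.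

Lemma serre_q (e T : A) : serreL e T -> e * qcomm q^-1 e T = q *: (qcomm q^-1 e T * e).
Proof. rewrite /serreL /qcomm => h1; ncr q [:: e; T] h1 hq hdl hsg. Qed.

Lemma gcore (a b t : A) : b * t = t * b -> serreM a b -> serreL a t ->
  a * qcomm q^-1 b (qcomm q^-1 a t) = qcomm q^-1 b (qcomm q^-1 a t) * a.
Proof.
rewrite /serreM /serreL /qcomm => h1 h2 h3.
ncr q [:: a; b; t] (conj h1 (conj h2 h3)) hq hdl hsg.
Qed.

Lemma qcomm_comm c (x a b : A) : x * a = a * x -> x * b = b * x ->
  x * qcomm c a b = qcomm c a b * x.
Proof.
move=> h1 h2; rewrite (@qcomm_scal _ _ c 1 1 x a b) ?mulr1 ?scale1r //; by rewrite scale1r.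
Qed.

Lemma chain_G h N m j : chain h N -> (m <= N)%N -> (0 < j < m)%N ->
  E (h j) * Qe h m = Qe h m * E (h j).
Proof.
move=> hc; elim: m j => [|m IH] j hm hj; first by lia.
rewrite Qe_S; have [hjm|hjm] := ltnP j m.
  apply: qcomm_comm; last by apply: IH => //; lia.
  apply: (chain_Ecomm hc); lia.
have {hjm} -> : j = m by lia.
case: m IH hm hj => [|m] IH hm hj; first by lia.
rewrite Qe_S; apply: gcore.
- rewrite /Qe; apply: qnest_comm => z; rewrite mem_rev => /mapP [i]; rewrite mem_iota => /andP[_ hi] ->.
  apply: (chain_Ecomm hc); lia.
- apply: serreLM; apply: (chain_serre hc); rewrite ?eqxx ?orbT //; lia.
- case: m {IH} hm hj => [|m] hm hj.
    by rewrite Qe0; apply: (chain_serre hc) => //; lia.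
  rewrite Qe_S; apply: serre_lin.
    apply: (chain_serre hc); rewrite ?eqxx ?orbT //; lia.
  rewrite /Qe; apply: qnest_comm => z; rewrite mem_rev => /mapP [i]; rewrite mem_iota => /andP[_ hi] ->.
  apply: (chain_Ecomm hc); lia.
Qed.

Lemma Pe_rcons h k : chain h k.+1 -> Pe h k.+1 = qcomm q^-1 (Pe h k) (E (h k.+1)).
Proof.
move=> hc; rewrite /Pe map_iota_rcons map_iota_rcons -!cats1 -catA /=.
rewrite qnest_snoc //; first exact: qcomm_assoc_m.
move=> z /mapP [i]; rewrite mem_iota => /andP[_ hi] ->.
apply: (chain_Ecomm hc); lia.
Qed.

Lemma chain_B h k : chain h k.+1 ->
  Pe (h \o S) k * Qe h k.+1 = q *: (Qe h k.+1 * Pe (h \o S) k).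
Proof.
move=> hc; case: k hc => [|k] hc.
  rewrite Pe0 Qe_S Qe0 /=; apply: serre_q; apply: (chain_serre hc) => //.
rewrite Pe_rcons; last exact: chain_shift.
rewrite /= Qe_S.
set P' := Pe (h \o S) k; set e := E (h k.+2); set T' := Qe h k.+1.
have r1 : e * qcomm q^-1 e T' = q *: (qcomm q^-1 e T' * e).
  apply: serre_q; rewrite /T' Qe_S; apply: serre_lin.
    apply: (chain_serre hc); rewrite ?eqxx ?orbT //; lia.
  rewrite /Qe; apply: qnest_comm => z; rewrite mem_rev => /mapP [i]; rewrite mem_iota => /andP[_ hi] ->.
  apply: (chain_Ecomm hc); lia.
have r2 : P' * qcomm q^-1 e T' = qcomm q^-1 e T' * P'.
  rewrite -Qe_S /P' /Pe; apply/esym/qnest_comm => z /mapP [i]; rewrite mem_iota => /andP[_ hi] -> /=.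
  apply/esym/(chain_G hc) => //; lia.
move: r1 r2; set T := qcomm q^-1 e T' => r1 r2.
rewrite /qcomm; ncr q [:: P'; e; T] (conj r1 r2) hq hdl hsg.
Qed.
End UqS.


Section TopA.
Variables (R : fieldType) (A : algType R) (q : R).
Hypotheses (hq : q != 0) (hdl : q - q^-1 != 0) (hsg : q + q^-1 != 0).
Lemma top_assembly (B1 Br Fx M L KX KXi : A) :
  M * B1 = B1 * M -> M * Br = Br * M ->
  M * Fx = Fx * M + (q - q^-1)^-1 *: (KX - KXi) ->
  L * B1 = q *: (B1 * L) -> L * Br = (q ^+ 2)^-1 *: (Br * L) -> L * Fx = Fx * L ->
  KX * B1 = B1 * KX -> KX * Br = q *: (Br * KX) ->
  KXi * B1 = B1 * KXi -> KXi * Br = q^-1 *: (Br * KXi) ->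
  KX * L = L * KX -> KXi * L = L * KXi ->
  (- (1 - q ^- 2) *: (M * L)) * qcomm q B1 (qcomm q Br Fx) =
  q^-1 *: (qcomm q B1 (qcomm q Br Fx) * (- (1 - q ^- 2) *: (M * L)))
  + (1 - q ^- 2) *: (qcomm q B1 Br * L * KX).
Proof.
move=> r1 r2 r3 r4 r5 r6 r7 r8 r9 r10 r11 r12; rewrite /qcomm.
ncr q [:: B1; Br; Fx; M; L; KX; KXi]
  (conj r1 (conj r2 (conj r3 (conj r4 (conj r5 (conj r6 (conj r7 (conj r8 (conj r9
  (conj r10 (conj r11 r12))))))))))) hq hdl hsg.
Qed.
End TopA.

Ltac csolve := rewrite /cartan; repeat (case: ifP => /=; try move/eqP); intros; lia.

Lemma sum_far a m i : (i.+1 < a)%N || (a + m < i)%N -> \sum_(j <- iota a m) cartan j i = 0.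
Proof.
move=> h; rewrite big1_seq // => j /andP[_]; rewrite mem_iota => hj.
apply: cartan_far; lia.
Qed.
Lemma sum_left a m : (0 < a)%N -> (0 < m)%N -> \sum_(j <- iota a m) cartan j a.-1 = -1.
Proof.
move=> ha; case: m => [|m] // _; rewrite /= big_cons sum_far; last by lia.
rewrite addr0; csolve.
Qed.
Lemma sum_right a m : (0 < m)%N -> \sum_(j <- iota a m) cartan j (a + m) = -1.
Proof.
case: m => [|m] // _; rewrite -addn1 iotaD big_cat big_seq1 sum_far; last by lia.
csolve.
Qed.
Lemma sum_sq a m : (0 < m)%N ->
  \sum_(i <- iota a m) \sum_(j <- iota a m) cartan j i = 2.
Proof.
elim: m => [|m IH] // _; case: m IH => [|m] IH; first by rewrite /= !big_seq1 cartan_self.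
rewrite -[m.+2]addn1 iotaD big_cat big_seq1.
rewrite (eq_bigr (fun i => \sum_(j <- iota a m.+1) cartan j i + cartan (a + m.+1) i)); last first.
  by move=> i _; rewrite big_cat big_seq1.
rewrite big_split IH // big_cat big_seq1 sum_right //.
rewrite (eq_bigr (fun i => cartan i (a + m.+1))); last by move=> i _; rewrite cartan_sym.
rewrite sum_right // cartan_self. done.
Qed.

Lemma map_iota_lin (f : nat -> nat) a m : (forall i, (i < m)%N -> f i = (a + i)%N) ->
  map f (iota 0 m) = iota a m.
Proof.
move=> h; rewrite -[a]addn0 iotaDl; apply/eq_in_map => i.
by rewrite mem_iota => /andP[_ hi]; apply: h.
Qed.
Lemma map_iota_rev (f : nat -> nat) c m : (m <= c.+1)%N ->
  (forall i, (i < m)%N -> f i = (c - i)%N) -> map f (iota 0 m) = rev (iota (c.+1 - m) m).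
Proof.
move=> hm h; apply: (@eq_from_nth _ 0%N); first by rewrite size_map size_rev !size_iota.
move=> i; rewrite size_map size_iota => hi.
rewrite (nth_map 0%N) ?size_iota // nth_iota // nth_rev ?size_iota // nth_iota; last by lia.
rewrite h //; lia.
Qed.

Section Side.
Variables (R : fieldType) (A : algType R) (n r : nat) (q : R) (c : nat -> R)
          (E F : nat -> A) (K : 'rV[int]_n -> A).
Hypothesis hU : Uq_relations q E F K.
Hypotheses (hq : q != 0) (hdl : q - q^-1 != 0) (hsg : q + q^-1 != 0).
Hypotheses (hr2 : (2 <= r)%N) (hn : (r.*2.+1 <= n)%N).

Lemma chain_up a k : (0 < a)%N -> (a + k <= n)%N -> chain n (fun i => a + i)%N k.
Proof.
move=> ha hk; split=> [i j hi hj|i hi]; last by lia.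
apply: cartan_eq; apply/idP/idP => /eqP h; apply/eqP; lia.
Qed.
Lemma chain_down b k : (k < b)%N -> (b <= n)%N -> chain n (fun i => b - i)%N k.
Proof.
move=> ha hk; split=> [i j hi hj|i hi]; last by lia.
rewrite [cartan i j]cartan_sym.
apply: cartan_eq; apply/idP/idP => /eqP h; apply/eqP; lia.
Qed.

Lemma B_scal (x f y : A) (cc s : R) : x * f = s *: (f * x) -> x * y = s *: (y * x) ->
  x * (f - cc *: y) = s *: ((f - cc *: y) * x).
Proof.
move=> h1 h2; rewrite mulrBr -scalerAr h1 h2 mulrBl -scalerAl scalerBr !scalerA.
by rewrite mulrC.
Qed.
Lemma mul_scal (x a b : A) (s t : R) : x * a = s *: (a * x) -> x * b = t *: (b * x) ->
  x * (a * b) = (s * t) *: (a * b * x).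
Proof. by move=> ha hb; rewrite mulrA ha -scalerAl -[a * x * b]mulrA hb -scalerAr scalerA mulrA. Qed.

Lemma KEz mu i z : (0 < i <= n)%N -> apair i mu = z -> K mu * E i = q ^ z *: (E i * K mu).
Proof. by move=> hi <-; apply: (UKE hU). Qed.
Lemma KFz mu i z : (0 < i <= n)%N -> apair i mu = z -> K mu * F i = q ^ (- z) *: (F i * K mu).
Proof. by move=> hi <-; apply: (UKF hU). Qed.
Lemma Kcommz mu la : K mu * K la = q ^ 0 *: (K la * K mu).
Proof. by rewrite expr0z scale1r (Kcomm hU). Qed.
Lemma apair_diff i x y : (0 < i <= n)%N ->
  apair i (alpha n x - alpha n y) = cartan x i - cartan y i.
Proof. by move=> hi; rewrite apairD apairN !apair_alpha. Qed.
Lemma apair_neg i x : (0 < i <= n)%N -> apair i (- alpha n x) = - cartan x i.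
Proof. by move=> hi; rewrite apairN apair_alpha. Qed.


Lemma flipz (x y : A) z : x * y = q ^ z *: (y * x) -> y * x = q ^ (- z) *: (x * y).
Proof. by move=> h; rewrite h scalerA -expfzDr // addNr expr0z scale1r. Qed.
Lemma qcomm_z cc (x a b : A) z1 z2 : x * a = q ^ z1 *: (a * x) -> x * b = q ^ z2 *: (b * x) ->
  x * qcomm cc a b = q ^ (z1 + z2) *: (qcomm cc a b * x).
Proof. by move=> h1 h2; rewrite expfzDr //; apply: qcomm_scal. Qed.
Lemma mul_z (x a b : A) z1 z2 : x * a = q ^ z1 *: (a * x) -> x * b = q ^ z2 *: (b * x) ->
  x * (a * b) = q ^ (z1 + z2) *: (a * b * x).
Proof. by move=> h1 h2; rewrite expfzDr //; apply: mul_scal. Qed.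
Lemma B_z (x f y : A) cc z : x * f = q ^ z *: (f * x) -> x * y = q ^ z *: (y * x) ->
  x * (f - cc *: y) = q ^ z *: ((f - cc *: y) * x).
Proof. exact: B_scal. Qed.
Lemma z0 (x y : A) : x * y = q ^ 0 *: (y * x) -> x * y = y * x.
Proof. by rewrite expr0z scale1r. Qed.
Lemma zeq (x y : A) z z' : z = z' -> x * y = q ^ z *: (y * x) -> x * y = q ^ z' *: (y * x).
Proof. by move=> ->. Qed.
Lemma Kcz mu la : K mu * K la = q ^ 0 *: (K la * K mu).
Proof. by rewrite expr0z scale1r (Kcomm hU). Qed.

Lemma commz (x y : A) : x * y = y * x -> x * y = q ^ 0 *: (y * x).
Proof. by rewrite expr0z scale1r. Qed.

Notation X := (Xseq n r).
Lemma hm : (0 < n - r.*2)%N. Proof. lia. Qed.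
Lemma inX z : z \in X -> (r < z <= n - r)%N.
Proof. by rewrite /Xseq mem_iota; lia. Qed.
Lemma allX : all (fun i => (0 < i <= n)%N) X.
Proof. by apply/allP => z /inX; lia. Qed.
Lemma allrX : all (fun i => (0 < i <= n)%N) (rev X).
Proof. by rewrite all_rev allX. Qed.

Lemma sumX_far i : (i.+2 <= r.+1)%N || (n.+1 - r < i)%N -> \sum_(j <- X) cartan j i = 0.
Proof. move=> h; apply: sum_far; lia. Qed.
Lemma sumX_left : \sum_(j <- X) cartan j r = -1.
Proof. by rewrite /Xseq (sum_left (a := r.+1)) //; lia. Qed.
Lemma sumX_right : \sum_(j <- X) cartan j (n.+1 - r) = -1.
Proof. rewrite /Xseq (_ : (n.+1 - r = r.+1 + (n - r.*2))%N); last lia. apply: sum_right; lia. Qed.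
Lemma sumX_sq : \sum_(i <- X) \sum_(j <- X) cartan j i = 2.
Proof. apply: sum_sq; lia. Qed.
Lemma sumXs f : \sum_(j <- X) cartan f j = \sum_(j <- X) cartan j f.
Proof. by apply: eq_bigr => j _; rewrite cartan_sym. Qed.

Lemma apair_beta i : (0 < i <= n)%N -> apair i (\sum_(j <- X) alpha n j) = \sum_(j <- X) cartan j i.
Proof. exact: apair_sum. Qed.
Lemma sum_apair_beta : \sum_(i <- X) apair i (\sum_(j <- X) alpha n j) = 2.
Proof.
rewrite -sumX_sq; apply: eq_big_seq => i /inX hi; apply: apair_beta; lia.
Qed.
Lemma sum_apair_alpha x : \sum_(i <- X) apair i (alpha n x) = \sum_(j <- X) cartan j x.
Proof. rewrite -sumXs; apply: eq_big_seq => i /inX hi; apply: apair_alpha; lia. Qed.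


Lemma qnestE_K cc mu s : all (fun i => (0 < i <= n)%N) s ->
  qnest cc E s * K mu = q ^ (- \sum_(i <- s) apair i mu) *: (K mu * qnest cc E s).
Proof. by move=> hs; apply: flipz; apply: (Kqnest_E hU). Qed.

Lemma EXm_Pe : EXm n r q E = Pe q E (fun i => (n - r) - i)%N (n - r.*2).-1.
Proof.
rewrite /EXm /Pe /Xseq; congr qnest; rewrite prednK; last lia.
rewrite (map_iota_rev (c := (n - r)%N)); last (by move=> i hi); last lia.
by congr (rev (iota _ _)); lia.
Qed.
Lemma FXp_Qf : FXp n r q F = Qf q F (fun i => (n - r) - i)%N (n - r.*2).-1.
Proof.
rewrite /FXp /Qf /Xseq; congr qnest; rewrite prednK; last lia.
rewrite (map_iota_rev (c := (n - r)%N)); last (by move=> i hi); last lia.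
by rewrite revK; congr (iota _ _); lia.
Qed.
Lemma beta1 : beta n (fun i => (n - r) - i)%N (n - r.*2).-1 = \sum_(j <- X) alpha n j.
Proof.
rewrite /beta /Xseq prednK; last lia.
rewrite (map_iota_rev (c := (n - r)%N)); last (by move=> i hi); last lia.
by rewrite big_rev; congr (\sum_(j <- iota _ _) _); lia.
Qed.
Lemma EXp_Pe : EXp n r q E = Pe q E (fun i => r.+1 + i)%N (n - r.*2).-1.
Proof.
rewrite /EXp /Pe /Xseq; congr qnest; rewrite prednK; last lia.
by rewrite (map_iota_lin (a := r.+1)).
Qed.
Lemma FXm_Qf : FXm n r q F = Qf q F (fun i => r.+1 + i)%N (n - r.*2).-1.
Proof.
rewrite /FXm /Qf /Xseq; congr qnest; rewrite prednK; last lia.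
by rewrite (map_iota_lin (a := r.+1)).
Qed.
Lemma beta2 : beta n (fun i => r.+1 + i)%N (n - r.*2).-1 = \sum_(j <- X) alpha n j.
Proof.
rewrite /beta /Xseq prednK; last lia.
by rewrite (map_iota_lin (a := r.+1)).
Qed.

Lemma chain1 : chain n (fun i => (n - r) - i)%N (n - r.*2).-1.
Proof. apply: chain_down; lia. Qed.
Lemma chain2 : chain n (fun i => r.+1 + i)%N (n - r.*2).-1.
Proof. apply: chain_up; lia. Qed.
Lemma chain1' : chain n (fun i => (n - r).+1 - i)%N (n - r.*2).-1.+1.
Proof. apply: chain_down; lia. Qed.
Lemma chain2' : chain n (fun i => r + i)%N (n - r.*2).-1.+1.
Proof. apply: chain_up; lia. Qed.

Lemma A1 : EXm n r q E * FXp n r q F = FXp n r q F * EXm n r q E +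
   (q - q^-1)^-1 *: (K (\sum_(j <- X) alpha n j) - K (- \sum_(j <- X) alpha n j)).
Proof. by rewrite EXm_Pe FXp_Qf -beta1; apply: (chain_A hU hq hdl hsg chain1). Qed.
Lemma A2 : EXp n r q E * FXm n r q F = FXm n r q F * EXp n r q E +
   (q - q^-1)^-1 *: (K (\sum_(j <- X) alpha n j) - K (- \sum_(j <- X) alpha n j)).
Proof. by rewrite EXp_Pe FXm_Qf -beta2; apply: (chain_A hU hq hdl hsg chain2). Qed.

Lemma B1' : EXm n r q E * qcomm q^-1 (EXp n r q E) (E (tau n r)) =
  q *: (qcomm q^-1 (EXp n r q E) (E (tau n r)) * EXm n r q E).
Proof.
have hc := chain1'.
have := chain_B hU hq hdl hsg hc.
have -> : Pe q E ((fun i => (n - r).+1 - i)%N \o S) (n - r.*2).-1 = EXm n r q E.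
  rewrite EXm_Pe /Pe; congr qnest; apply: eq_map => i /=; lia.
have -> : Qe q E (fun i => (n - r).+1 - i)%N (n - r.*2).-1.+1 =
          qcomm q^-1 (EXp n r q E) (E (tau n r)); last by [].
rewrite /Qe /EXp /Xseq prednK; last lia.
rewrite (map_iota_rev (c := (n - r).+1)); last (by move=> i hi); last lia.
rewrite revK (_ : ((n - r).+2 - (n - r.*2).+1)%N = r.+1); last lia.
have e : (n - r.*2 = ((n - r.*2).-1).+1)%N by lia.
rewrite e; set k := (n - r.*2).-1.
have -> : iota r.+1 k.+2 = iota r.+1 k ++ [:: (r.+1 + k)%N; (r.+1 + k).+1].
  by rewrite -addn2 iotaD.
rewrite qnest_snoc; first last.
- move=> z; rewrite mem_iota => hz; apply: (UEcomm hU); try lia.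
  apply: cartan_far; lia.
- exact: qcomm_assoc_m.
congr (qcomm _ (qnest _ _ _) (E _)); last by rewrite /tau /k; lia.
by rewrite -[k.+1]addn1 iotaD.
Qed.

Lemma B2' : EXp n r q E * qcomm q^-1 (EXm n r q E) (E r) =
  q *: (qcomm q^-1 (EXm n r q E) (E r) * EXp n r q E).
Proof.
have hc := chain2'.
have := chain_B hU hq hdl hsg hc.
have -> : Pe q E ((fun i => r + i)%N \o S) (n - r.*2).-1 = EXp n r q E.
  rewrite EXp_Pe /Pe; congr qnest; apply: eq_map => i /=; lia.
have -> : Qe q E (fun i => r + i)%N (n - r.*2).-1.+1 =
          qcomm q^-1 (EXm n r q E) (E r); last by [].
rewrite /Qe /EXm /Xseq.
have e : (n - r.*2 = ((n - r.*2).-1).+1)%N by lia.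
rewrite -e (map_iota_lin (a := r)) //.
set k := (n - r.*2).-1; rewrite e -/k.
have -> : rev (iota r k.+2) = rev (iota r.+2 k) ++ [:: r.+1; r].
  by rewrite /= !rev_cons -!cats1 -catA.
rewrite qnest_snoc; first last.
- move=> z; rewrite mem_rev mem_iota => hz; apply: (UEcomm hU); try lia.
  apply: cartan_far; lia.
- exact: qcomm_assoc_m.
by rewrite /= rev_cons cats1.
Qed.

Lemma sum_apair_diff x y : \sum_(i <- X) apair i (alpha n x - alpha n y) =
  \sum_(j <- X) cartan j x - \sum_(j <- X) cartan j y.
Proof.
rewrite -!sumXs -sumrB; apply: eq_big_seq => i /inX hi; apply: apair_diff; lia.
Qed.
Lemma sum_apair_neg x : \sum_(i <- X) apair i (- alpha n x) = - \sum_(j <- X) cartan j x.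
Proof.
rewrite -!sumXs -sumrN; apply: eq_big_seq => i /inX hi; apply: apair_neg; lia.
Qed.
Lemma sum_apair_nbeta : \sum_(i <- X) apair i (- \sum_(j <- X) alpha n j) = -2.
Proof.
rewrite (eq_bigr (fun i => - apair i (\sum_(j <- X) alpha n j))); last by move=> i _; rewrite apairN.
by rewrite sumrN sum_apair_beta.
Qed.

Lemma to1 (x y : A) : x * y = q ^ 1 *: (y * x) -> x * y = q *: (y * x).
Proof. by rewrite expr1z. Qed.
Lemma toN1 (x y : A) : x * y = q ^ (-1) *: (y * x) -> x * y = q^-1 *: (y * x).
Proof. by rewrite exprN1. Qed.

Lemma side1 :
  let B1 := Bgen c E F K r.-1 in
  let Br := Br r q c E F K in
  let S := qcomm q B1 (qcomm q Br (FXp n r q F)) in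
  let Ztr := - (1 - q ^- 2) *: (EXm n r q E * Lw K r) in
  Ztr * S = q^-1 *: (S * Ztr) + (1 - q ^- 2) *: (qcomm q B1 Br * Lw K r * KX r K).
Proof.
move=> B1 Br' S Ztr; rewrite /Ztr /S.
have hr1 : (0 < r.-1 <= n)%N by lia.
have hr : (0 < r <= n)%N by lia.
have htr : (0 < tau n r <= n)%N by rewrite /tau; lia.
have ht1 : (0 < tau n r.-1 <= n)%N by rewrite /tau; lia.
apply: (top_assembly (KXi := K (- \sum_(j <- X) alpha n j)) hq hdl hsg).
-
  apply: z0; rewrite /B1 /Bgen; apply: B_z.
    apply: commz; apply/esym; rewrite /EXm; apply: qnest_comm => z; rewrite mem_rev => /inX hz.
    apply/esym/(UEF hU); try lia; apply/eqP; lia.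
  apply: (zeq (z := 0 + 0)) => //; apply: mul_z.
    apply: commz; apply/esym; rewrite /EXm; apply: qnest_comm => z; rewrite mem_rev => /inX hz.
    apply: (UEcomm hU); rewrite /tau; try lia; apply: cartan_far; lia.
  rewrite /EXm /Kinv qnestE_K ?allrX // big_rev sum_apair_neg sumX_far; last lia.
  by rewrite ?oppr0.
-
  apply: z0; rewrite /Br' /Br; apply: B_z.
    apply: commz; apply/esym; rewrite /EXm; apply: qnest_comm => z; rewrite mem_rev => /inX hz.
    apply/esym/(UEF hU); try lia; apply/eqP; lia.
  apply: (zeq (z := 1 + -1)) => //; apply: mul_z.
    by rewrite expr1z; apply: B1'.
  rewrite /EXm /Kinv qnestE_K ?allrX // big_rev sum_apair_neg sumX_left.
  by [].
- exact: A1.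
-
  apply: to1; rewrite /B1 /Bgen /Lw; apply: B_z.
    rewrite (KFz (z := -1)) //; rewrite apair_diff // /tau; csolve.
  apply: (zeq (z := 1 + 0)) => //; apply: mul_z.
    apply: KEz => //; rewrite apair_diff //; rewrite /tau; csolve.
  exact: Kcz.
-
  suff h : Lw K r * Br' = q ^ (-2) *: (Br' * Lw K r) by exact: h.
  rewrite /Br' /Br /Lw; apply: B_z.
    rewrite (KFz (z := 2)) //; rewrite apair_diff //; rewrite /tau; csolve.
  apply: (zeq (z := (0 + -2) + 0)) => //; apply: mul_z; last exact: Kcz.
  apply: qcomm_z.
    rewrite /EXp (Kqnest_E hU) ?allX // sum_apair_diff.
    by rewrite sumX_left /tau sumX_right subrr.
  apply: KEz => //; rewrite apair_diff //; rewrite /tau; csolve.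
-
  apply: z0; rewrite /FXp /Lw (Kqnest_F hU) ?allX // sum_apair_diff.
  by rewrite sumX_left /tau sumX_right subrr oppr0.
-
  apply: z0; rewrite /B1 /Bgen /KX; apply: B_z.
    rewrite (KFz (z := 0)) //; rewrite apair_beta // sumX_far //; lia.
  apply: (zeq (z := 0 + 0)) => //; apply: mul_z; last exact: Kcz.
  apply: KEz => //; rewrite apair_beta // sumX_far //; rewrite /tau; lia.
-
  apply: to1; rewrite /Br' /Br /KX; apply: B_z.
    rewrite (KFz (z := -1)) //; rewrite apair_beta // sumX_left //.
  apply: (zeq (z := (2 + -1) + 0)) => //; apply: mul_z; last exact: Kcz.
  apply: qcomm_z.
    by rewrite /EXp (Kqnest_E hU) ?allX // sum_apair_beta.
  apply: KEz => //; rewrite apair_beta // /tau sumX_right //.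
-
  apply: z0; rewrite /B1 /Bgen; apply: B_z.
    rewrite (KFz (z := 0)) //; rewrite apairN apair_beta // sumX_far ?oppr0 //; lia.
  apply: (zeq (z := 0 + 0)) => //; apply: mul_z; last exact: Kcz.
  apply: KEz => //; rewrite apairN apair_beta // sumX_far ?oppr0 //; rewrite /tau; lia.
-
  apply: toN1; rewrite /Br' /Br; apply: B_z.
    rewrite (KFz (z := 1)) //; rewrite apairN apair_beta // sumX_left //.
  apply: (zeq (z := (-2 + 1) + 0)) => //; apply: mul_z; last exact: Kcz.
  apply: qcomm_z.
    by rewrite /EXp (Kqnest_E hU) ?allX // sum_apair_nbeta.
  apply: KEz => //; rewrite apairN apair_beta // /tau sumX_right //.
- exact: (Kcomm hU).
- exact: (Kcomm hU).
Qed.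

Lemma side2 :
  let B1t := Bgen c E F K (tau n r.-1) in
  let Btr := Btr r q c E F K in
  let St := qcomm q B1t (qcomm q Btr (FXm n r q F)) in
  let Zr := - (1 - q ^- 2) *: (EXp n r q E * Lw K (tau n r)) in
  Zr * St = q^-1 *: (St * Zr) + (1 - q ^- 2) *: (qcomm q B1t Btr * Lw K (tau n r) * KX r K).
Proof.
move=> B1 Br' S Ztr; rewrite /Ztr /S.
have hr1 : (0 < r.-1 <= n)%N by lia.
have hr : (0 < r <= n)%N by lia.
have htr : (0 < tau n r <= n)%N by rewrite /tau; lia.
have ht1 : (0 < tau n r.-1 <= n)%N by rewrite /tau; lia.
have htt1 : (0 < tau n (tau n r.-1) <= n)%N by rewrite /tau; lia.
have ttr : tau n (tau n r) = r by rewrite /tau; lia.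
apply: (top_assembly (KXi := K (- \sum_(j <- X) alpha n j)) hq hdl hsg).
-
  apply: z0; rewrite /B1 /Bgen; apply: B_z.
    apply: commz; apply/esym; rewrite /EXp; apply: qnest_comm => z /inX hz.
    apply/esym/(UEF hU); rewrite /tau; try lia; apply/eqP; lia.
  apply: (zeq (z := 0 + 0)) => //; apply: mul_z.
    apply: commz; apply/esym; rewrite /EXp; apply: qnest_comm => z /inX hz.
    apply: (UEcomm hU); rewrite /tau; try lia; apply: cartan_far; lia.
  rewrite /EXp /Kinv qnestE_K ?allX // sum_apair_neg sumX_far; last by rewrite /tau; lia.
  by rewrite ?oppr0.
-
  apply: z0; rewrite /Br' /Btr; apply: B_z.
    apply: commz; apply/esym; rewrite /EXp; apply: qnest_comm => z /inX hz.
    apply/esym/(UEF hU); rewrite /tau; try lia; apply/eqP; lia.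
  apply: (zeq (z := 1 + -1)) => //; apply: mul_z.
    by rewrite expr1z; apply: B2'.
  rewrite /EXp /Kinv qnestE_K ?allX // sum_apair_neg /tau sumX_right.
  by [].
- exact: A2.
-
  apply: to1; rewrite /B1 /Bgen /Lw; apply: B_z.
    rewrite (KFz (z := -1)) //; rewrite apair_diff // /tau; csolve.
  apply: (zeq (z := 1 + 0)) => //; apply: mul_z.
    apply: KEz => //; rewrite apair_diff //; rewrite /tau; csolve.
  exact: Kcz.
-
  suff h : Lw K (tau n r) * Br' = q ^ (-2) *: (Br' * Lw K (tau n r)) by exact: h.
  rewrite /Br' /Btr /Lw ttr; apply: B_z.
    rewrite (KFz (z := 2)) //; rewrite apair_diff //; rewrite /tau; csolve.
  apply: (zeq (z := (0 + -2) + 0)) => //; apply: mul_z; last exact: Kcz.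
  apply: qcomm_z.
    rewrite /EXm (Kqnest_E hU) ?allrX // big_rev sum_apair_diff.
    by rewrite sumX_left /tau sumX_right subrr.
  apply: KEz => //; rewrite apair_diff //; rewrite /tau; csolve.
-
  apply: z0; rewrite /FXm /Lw ttr (Kqnest_F hU) ?allrX // big_rev sum_apair_diff.
  by rewrite sumX_left /tau sumX_right subrr oppr0.
-
  apply: z0; rewrite /B1 /Bgen /KX; apply: B_z.
    rewrite (KFz (z := 0)) //; rewrite apair_beta // sumX_far //; rewrite /tau; lia.
  apply: (zeq (z := 0 + 0)) => //; apply: mul_z; last exact: Kcz.
  apply: KEz => //; rewrite apair_beta // sumX_far //; rewrite /tau; lia.
-
  apply: to1; rewrite /Br' /Btr /KX; apply: B_z.
    rewrite (KFz (z := -1)) //; rewrite apair_beta // /tau sumX_right //.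
  apply: (zeq (z := (2 + -1) + 0)) => //; apply: mul_z; last exact: Kcz.
  apply: qcomm_z.
    by rewrite /EXm (Kqnest_E hU) ?allrX // big_rev sum_apair_beta.
  apply: KEz => //; rewrite apair_beta // sumX_left //.
-
  apply: z0; rewrite /B1 /Bgen; apply: B_z.
    rewrite (KFz (z := 0)) //; rewrite apairN apair_beta // sumX_far ?oppr0 //; rewrite /tau; lia.
  apply: (zeq (z := 0 + 0)) => //; apply: mul_z; last exact: Kcz.
  apply: KEz => //; rewrite apairN apair_beta // sumX_far ?oppr0 //; rewrite /tau; lia.
-
  apply: toN1; rewrite /Br' /Btr; apply: B_z.
    rewrite (KFz (z := 1)) //; rewrite apairN apair_beta // /tau sumX_right //.
  apply: (zeq (z := (-2 + 1) + 0)) => //; apply: mul_z; last exact: Kcz.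
  apply: qcomm_z.
    by rewrite /EXm (Kqnest_E hU) ?allrX // big_rev sum_apair_nbeta.
  apply: KEz => //; rewrite apairN apair_beta // sumX_left //.
- exact: (Kcomm hU).
- exact: (Kcomm hU).
Qed.
End Side.

Unset Implicit Arguments.

Theorem lemmaA3
  (Kf : fieldType) (char0 : [pchar Kf] =i pred0)
  (n r : nat) (hr2 : (2 <= r)%N) (hrn : (r.+1 <= uphalf n)%N)
  (c : nat -> {fraction {poly Kf}})
  (hc0 : forall i, (0 < i <= n)%N -> i \notin Xseq n r -> c i != 0)
  (hcs : forall i, (0 < i <= n)%N -> i \notin Xseq n r -> i != r ->
           i != tau n r -> c i = c (tau n i))
  (A : algType {fraction {poly Kf}})
  (E F : nat -> A) (K : 'rV[int]_n -> A)
  (hUq : Uq_relations ((FracField.tofrac ('X : {poly Kf})) ^+ 2) E F K) :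
  let q := (FracField.tofrac ('X : {poly Kf})) ^+ 2 in
  let B1 := Bgen c E F K r.-1 in
  let Br := Br r q c E F K in
  let B1t := Bgen c E F K (tau n r.-1) in
  let Btr := Btr r q c E F K in
  let S := qcomm q B1 (qcomm q Br (FXp n r q F)) in
  let St := qcomm q B1t (qcomm q Btr (FXm n r q F)) in
  let Zr := - (1 - q ^- 2) *: (EXp n r q E * Lw K (tau n r)) in
  let Ztr := - (1 - q ^- 2) *: (EXm n r q E * Lw K r) in
  Ztr * S = q^-1 *: (S * Ztr)
            + (1 - q ^- 2) *: (qcomm q B1 Br * Lw K r * KX r K)
  /\
  Zr * St = q^-1 *: (St * Zr)
            + (1 - q ^- 2) *: (qcomm q B1t Btr * Lw K (tau n r) * KX r K).
Proof.
move=> q B1 Br' B1t Btr' S St Zr Ztr.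
have hx : (FracField.tofrac ('X : {poly Kf})) != 0 by rewrite tofrac_eq0 polyX_eq0.
have hq : q != 0 by rewrite expf_neq0.
have hq4 : q * q = FracField.tofrac ('X^4 : {poly Kf}) by rewrite /q -exprD tofracXn.
have hdl : q - q^-1 != 0.
  apply/negP => /eqP h.
  have : q * q - 1 = 0 by rewrite -(divff hq) -mulrBr h mulr0.
  rewrite hq4 -tofrac1 -tofracB => /eqP; rewrite tofrac_eq0 => /eqP e.
  by have := size_Xn_sub_1 Kf (n := 4) isT; rewrite e size_poly0.
have hsg : q + q^-1 != 0.
  apply/negP => /eqP h.
  have : q * q + 1 = 0 by rewrite -(divff hq) -mulrDr h mulr0.
  rewrite hq4 -tofrac1 -tofracD => /eqP; rewrite tofrac_eq0 => /eqP e.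
  by have := size_XnaddC (n := 4) (1 : Kf) isT; rewrite polyC1 e size_poly0.
have hn : (r.*2.+1 <= n)%N by lia.
split.
- exact: (side1 c hUq hq hdl hsg hr2 hn).
- exact: (side2 c hUq hq hdl hsg hr2 hn).
Qed.
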